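(* For every 3-periodic of the elliptic billiard, the interior angles $\theta^\dagger_{1,i}$ ($i=1,2,3$) of its $f_1$-inversive triangle satisfy $$\sum_{i=1}^3\cos\theta^\dagger_{1,i}=\frac{\delta\,(a^2+c^2-\delta)}{a^2c^2},\qquad \delta=\sqrt{a^4-a^2b^2+b^4}.$$
   Context: The elliptic billiard is $\mathcal{E}: x^2/a^2+y^2/b^2=1$, $a>b>0$, $c=\sqrt{a^2-b^2}$, with focus $f_1=(-c,0)$. A 3-periodic is a triangle $P_1P_2P_3$ inscribed in $\mathcal{E}$ that is a closed billiard trajectory (at each vertex the normal to $\mathcal{E}$ bisects the angle between the two incident sides). The $f_1$-inversive triangle has vertices $P^\dagger_{1,i}=f_1+\rho^2\,(P_i-f_1)/|P_i-f_1|^2$, the inversions of the $P_i$ in a circle of radius $\rho>0$ centered at $f_1$ (its angles do not depend on $\rho$). *)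

(* Defs.v *)
From Stdlib Require Import Reals Lra.
Open Scope R_scope.

Definition pt := (R * R)%type.

Definition vsub (p q : pt) : pt := (fst p - fst q, snd p - snd q).
Definition dot (u v : pt) : R := fst u * fst v + snd u * snd v.
Definition cross (u v : pt) : R := fst u * snd v - snd u * fst v.
Definition vnorm (u : pt) : R := sqrt (dot u u).
Definition vscale (k : R) (u : pt) : pt := (k * fst u, k * snd u).
Definition vadd (u v : pt) : pt := (fst u + fst v, snd u + snd v).
Definition unitv (u : pt) : pt := vscale (/ vnorm u) u.

Definition on_ellipse (a b : R) (p : pt) : Prop :=
  (fst p)^2 / a^2 + (snd p)^2 / b^2 = 1.

Definition ell_normal (a b : R) (p : pt) : pt := (fst p / a^2, snd p / b^2).

(* Billiard reflection at vertex p with neighbours q, r: the normal line at p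
   bisects the angle q p r, i.e. the sum of the unit vectors along the two
   incident sides is parallel to the normal. *)
Definition bisects_normal (a b : R) (q p r : pt) : Prop :=
  cross (vadd (unitv (vsub q p)) (unitv (vsub r p))) (ell_normal a b p) = 0.

Definition three_periodic (a b : R) (P1 P2 P3 : pt) : Prop :=
  on_ellipse a b P1 /\ on_ellipse a b P2 /\ on_ellipse a b P3 /\
  P1 <> P2 /\ P2 <> P3 /\ P3 <> P1 /\
  bisects_normal a b P3 P1 P2 /\
  bisects_normal a b P1 P2 P3 /\
  bisects_normal a b P2 P3 P1.

Definition invert (f : pt) (rho : R) (p : pt) : pt :=
  vadd f (vscale (rho^2 / (dot (vsub p f) (vsub p f))) (vsub p f)).

Definition angle_at (q p r : pt) : R :=
  acos (dot (vsub q p) (vsub r p) / (vnorm (vsub q p) * vnorm (vsub r p))).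

(* Main.v *)
Require Import Defs.
From Stdlib Require Import Reals.
From Stdlib Require Import Lra Nsatz.
Open Scope R_scope.

Ltac nsatz' := cbn [pow] in *; nsatz.

Lemma core_vertex (a al X k h1 h2 h3 S2 n2 p r sg qq ss qs W : R) :
  al^2-2*a*al <> 0 -> a^4-2*a^3*al <> 0 -> n2 <> 0 ->
  k = (a^4-2*a^3*al)/(al^2-2*a*al) ->
  h1 = a^2*(a^2-k) - (a^2-al^2)*k ->
  h2 = a^2*(a^2-k) + (a^2-al^2)*k ->
  h3 = (a^2-al^2)*(a^2+(a^2-k)) - a^2*(a^2-k) ->
  S2 = 1 - X^2/k -> n2 = h1^2*X^2/k + h2^2*S2 ->
  p = 1 + h3*(h1*X^2/k + h2*S2)/n2 -> r = a - h3*h1*X/n2 -> sg = (n2-h3^2)/n2^2 ->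
  qq = (h1-h2)^2*X^2*S2/k -> ss = k*h2^2*S2 -> qs = -(h1-h2)*h2*X*S2 ->
  W = S2*(k*h2^2*p^2 - 2*h2*p*(h1-h2)*X*r + (h1-h2)^2*X^2*r^2/k) ->
  al*(a-X)*(2*((p*r+sg*qs)^2+sg*W) - (2*sg*n2*(a+X))^2)
   = 2*(a*(a-X)-(a^2-al^2))*((p^2-sg*qq)*(r^2-sg*ss)).
Proof.
  intros HD HN Hn2 Hk Hh1 Hh2 Hh3 HS Hn Hp Hr Hsg Hqq Hss Hqs HW.
  subst W qs ss qq sg r p.
  assert (HNN : ((a ^ 2 * (a ^ 2 * (al ^ 2 - 2 * a * al) - (a ^ 4 - 2 * a ^ 3 * al)) -
    (a ^ 2 - al ^ 2) * (a ^ 4 - 2 * a ^ 3 * al)) * X) ^ 2 * (al ^ 2 - 2 * a * al) +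
  (a ^ 2 * (a ^ 2 * (al ^ 2 - 2 * a * al) - (a ^ 4 - 2 * a ^ 3 * al)) +
   (a ^ 2 - al ^ 2) * (a ^ 4 - 2 * a ^ 3 * al)) ^ 2 * (a ^ 4 - 2 * a ^ 3 * al - X ^ 2 * (al ^ 2 - 2 * a * al)) <> 0).
  { intro Z. apply Hn2. rewrite Hn, HS, Hh1, Hh2, Hk.
    apply (Rmult_eq_reg_l ((al ^ 2 - 2 * a * al)^2*(a ^ 4 - 2 * a ^ 3 * al))).
    2:{ apply Rmult_integral_contrapositive_currified; [apply pow_nonzero|]; assumption. }
    rewrite Rmult_0_r. rewrite <- Z. field. split; assumption. }
  subst n2 S2 h1 h2 h3 k.
  field. repeat split; assumption.
Qed.

Lemma core_sum (a al X k h1 h2 h3 S2 n2 sg ss rr : R) :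
  al^2-2*a*al <> 0 -> a^4-2*a^3*al <> 0 -> n2 <> 0 -> h1 <> 0 -> h3 <> 0 -> a <> 0 ->
  k = (a^4-2*a^3*al)/(al^2-2*a*al) ->
  h1 = a^2*(a^2-k) - (a^2-al^2)*k ->
  h2 = a^2*(a^2-k) + (a^2-al^2)*k ->
  h3 = (a^2-al^2)*(a^2+(a^2-k)) - a^2*(a^2-k) ->
  S2 = 1 - X^2/k -> n2 = h1^2*X^2/k + h2^2*S2 ->
  sg = (n2-h3^2)/n2^2 -> ss = k*h2^2*S2 -> rr = a + h3*h1*X/n2 ->
  (rr^2 - sg*ss) + (a-X)*(2*rr) = (3+2*(a^2-al^2)*(k/h1+a^2/h3))/(2*a)*((a-X)*(rr^2-sg*ss)).
Proof.
  intros HD HN Hn2 Hh1n Hh3n Ha Hk Hh1 Hh2 Hh3 HS Hn Hsg Hss Hrr.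
  subst rr ss sg.
  assert (HNN : ((a ^ 2 * (a ^ 2 * (al ^ 2 - 2 * a * al) - (a ^ 4 - 2 * a ^ 3 * al)) -
    (a ^ 2 - al ^ 2) * (a ^ 4 - 2 * a ^ 3 * al)) * X) ^ 2 * (al ^ 2 - 2 * a * al) +
  (a ^ 2 * (a ^ 2 * (al ^ 2 - 2 * a * al) - (a ^ 4 - 2 * a ^ 3 * al)) +
   (a ^ 2 - al ^ 2) * (a ^ 4 - 2 * a ^ 3 * al)) ^ 2 * (a ^ 4 - 2 * a ^ 3 * al - X ^ 2 * (al ^ 2 - 2 * a * al)) <> 0).
  { intro Z. apply Hn2. rewrite Hn, HS, Hh1, Hh2, Hk.
    apply (Rmult_eq_reg_l ((al ^ 2 - 2 * a * al)^2*(a ^ 4 - 2 * a ^ 3 * al))).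
    2:{ apply Rmult_integral_contrapositive_currified; [apply pow_nonzero|]; assumption. }
    rewrite Rmult_0_r. rewrite <- Z. field. split; assumption. }
  assert (HH3 : (a ^ 2 - al ^ 2) *
  (a ^ 2 * (al ^ 2 - 2 * a * al) +
   (a ^ 2 * (al ^ 2 - 2 * a * al) - (a ^ 4 - 2 * a ^ 3 * al))) -
  a ^ 2 * (a ^ 2 * (al ^ 2 - 2 * a * al) - (a ^ 4 - 2 * a ^ 3 * al)) <> 0).
  { intro Z. apply Hh3n. rewrite Hh3, Hk.
    apply (Rmult_eq_reg_l (al ^ 2 - 2 * a * al)); [|assumption].
    rewrite Rmult_0_r, <- Z. field. assumption. }
  assert (HH1 : a ^ 2 * (a ^ 2 * (al ^ 2 - 2 * a * al) - (a ^ 4 - 2 * a ^ 3 * al)) -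
  (a ^ 2 - al ^ 2) * (a ^ 4 - 2 * a ^ 3 * al) <> 0).
  { intro Z. apply Hh1n. rewrite Hh1, Hk.
    apply (Rmult_eq_reg_l (al ^ 2 - 2 * a * al)); [|assumption].
    rewrite Rmult_0_r, <- Z. field. assumption. }
  subst n2 S2 h1 h2 h3 k.
  field. repeat split; assumption.
Qed.

Definition ee (C1 S1 C2 S2 : R) := 1 - (C1*C2+S1*S2).
Definition hh1 (a b lam : R) := a^2*b^2 - lam*(a^2-b^2).
Definition hh2 (a b lam : R) := a^2*b^2 + lam*(a^2-b^2).
Definition hh3 (a b lam : R) := lam*(a^2+b^2) - a^2*b^2.
Definition bil (a b lam C1 S1 C2 S2 : R) :=
  hh1 a b lam*C1*C2 + hh2 a b lam*S1*S2 + hh3 a b lam.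

Lemma line_decomp (A B K x y : R) : A^2+B^2 <> 0 -> A*x + B*y + K = 0 ->
  x = -K*A/(A^2+B^2) + ((-B*x + A*y)/(A^2+B^2))*(-B) /\
  y = -K*B/(A^2+B^2) + ((-B*x + A*y)/(A^2+B^2))*A.
Proof.
  intros Hn H. replace K with (-(A*x+B*y)) by lra.
  split; field; assumption.
Qed.

Lemma vertex (a b c lam al C1 S1 C2 S2 C3 S3 : R) :
  0 < a -> 0 < c -> c^2 = a^2 - b^2 -> 0 < al -> al < a -> al^2 = a^2 - lam ->
  c^2*(al^2-2*a*al) = a^4-2*a^3*al ->
  0 < hh1 a b lam -> 0 < hh2 a b lam -> 0 < hh3 a b lam ->
  C1^2+S1^2=1 -> C2^2+S2^2=1 -> C3^2+S3^2=1 ->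
  bil a b lam C1 S1 C2 S2 = 0 -> bil a b lam C1 S1 C3 S3 = 0 ->
  0 < ee C2 S2 C3 S3 ->
  al*(a-c*C1)*((ee C1 S1 C3 S3*(a+c*C2))^2 + (ee C1 S1 C2 S2*(a+c*C3))^2 - (ee C2 S2 C3 S3*(a+c*C1))^2)
   = 2*(a*(a-c*C1)-lam)*((ee C1 S1 C3 S3*(a+c*C2))*(ee C1 S1 C2 S2*(a+c*C3)))
  /\ (a-c*C2)*(a-c*C3) + (a-c*C1)*((a-c*C2)+(a-c*C3))
   = (3+2*lam*(c^2/hh1 a b lam + a^2/hh3 a b lam))/(2*a)*((a-c*C1)*(a-c*C2)*(a-c*C3)).
Proof.
  intros Ha Hc Hcb Hal Hala Hlam HDN Hh1 Hh2 Hh3 HZ1 HZ2 HZ3 Hb12 Hb13 He23.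
  unfold bil in Hb12, Hb13.
  set (h1 := hh1 a b lam) in *. set (h2 := hh2 a b lam) in *. set (h3 := hh3 a b lam) in *.
  assert (HD : al^2-2*a*al < 0) by nra.
  assert (HN : a^4-2*a^3*al < 0).
  { rewrite <- HDN. assert (0 < c^2) by nra. nra. }
  set (A := h1*C1). set (B := h2*S1). set (n2 := A^2+B^2).
  assert (Hn2 : 0 < n2).
  { unfold n2, A, B. destruct (Req_dec C1 0) as [E|E].
    - subst C1. assert (S1^2 = 1) by lra. nra.
    - assert (0 < C1*C1) by (apply Rsqr_pos_lt; assumption).
      assert (0 < h1*h1) by nra.
      assert (0 < (h1*h1)*(C1*C1)) by (apply Rmult_lt_0_compat; assumption).
      nra. }
  assert (Hn2' : A^2+B^2 <> 0) by (fold n2; lra).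
  pose (t2 := (-B*C2 + A*S2)/(A^2+B^2)).
  assert (HC2S2 : C2 = -h3*A/(A^2+B^2) + t2*(-B) /\ S2 = -h3*B/(A^2+B^2) + t2*A).
  { apply line_decomp; [assumption|]. unfold A, B. lra. }
  pose (t3 := (-B*C3 + A*S3)/(A^2+B^2)).
  assert (HC3S3 : C3 = -h3*A/(A^2+B^2) + t3*(-B) /\ S3 = -h3*B/(A^2+B^2) + t3*A).
  { apply line_decomp; [assumption|]. unfold A, B. lra. }
  clearbody t2 t3. destruct HC2S2 as [HC2 HS2]. destruct HC3S3 as [HC3 HS3].
  fold n2 in HC2, HS2, HC3, HS3.
  assert (Hcirc : forall t, (-h3*A/n2 + t*(-B))^2 + (-h3*B/n2 + t*A)^2 = h3^2/n2 + t^2*n2).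
  { intro t. unfold n2. field. assumption. }
  assert (Ht2 : t2^2*n2 = 1 - h3^2/n2).
  { rewrite <- HZ2, HC2, HS2, Hcirc. ring. }
  assert (Ht3 : t3^2*n2 = 1 - h3^2/n2).
  { rewrite <- HZ3, HC3, HS3, Hcirc. ring. }
  assert (Ht23 : t3 = - t2).
  { assert (E : (t3 - t2)*(t3+t2) = 0).
    { apply (Rmult_eq_reg_r n2); [|lra]. rewrite Rmult_0_l.
      replace ((t3 - t2) * (t3 + t2) * n2) with (t3^2*n2 - t2^2*n2) by ring. lra. }
    destruct (Rmult_integral _ _ E) as [E'|E']; [|lra].
    exfalso. assert (t3 = t2) by lra. subst t3.
    assert (C3 = C2) by (rewrite HC3, HC2; reflexivity).
    assert (S3 = S2) by (rewrite HS3, HS2; reflexivity).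
    unfold ee in He23. rewrite H, H0 in He23. nra. }
  subst t3. set (tau := t2) in *. clearbody tau. clear t2.
  subst C2 S2 C3 S3.
  set (p := 1 + h3*(A*C1+B*S1)/n2).
  set (q := -B*C1 + A*S1).
  set (r := a - c*h3*A/n2).
  set (s := -c*B).
  set (rr := a + c*h3*A/n2).
  assert (E13 : ee C1 S1 (-h3*A/n2 + (-tau)*(-B)) (-h3*B/n2 + (-tau)*A) = p + tau*q).
  { unfold ee, p, q. field. lra. }
  assert (E12 : ee C1 S1 (-h3*A/n2 + tau*(-B)) (-h3*B/n2 + tau*A) = p - tau*q).
  { unfold ee, p, q. field. lra. }
  assert (E23 : ee (-h3*A/n2 + tau*(-B)) (-h3*B/n2 + tau*A) (-h3*A/n2 + (-tau)*(-B)) (-h3*B/n2 + (-tau)*A) = 2*tau^2*n2).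
  { transitivity (1 - h3^2/n2 + tau^2*n2).
    - unfold ee, n2. field. assumption.
    - lra. }
  assert (D2 : a + c*(-h3*A/n2 + tau*(-B)) = r + tau*s) by (unfold r, s; field; lra).
  assert (D3 : a + c*(-h3*A/n2 + (-tau)*(-B)) = r - tau*s) by (unfold r, s; field; lra).
  assert (D2' : a - c*(-h3*A/n2 + tau*(-B)) = rr - tau*s) by (unfold rr, s; field; lra).
  assert (D3' : a - c*(-h3*A/n2 + (-tau)*(-B)) = rr + tau*s) by (unfold rr, s; field; lra).
  rewrite E13, E12, E23, D2, D3, D2', D3'.
  set (sg := (n2-h3^2)/n2^2).
  assert (Htau : tau^2 = sg).
  { unfold sg. apply (Rmult_eq_reg_r n2); [|lra].
    rewrite Ht2. field. lra. }
  assert (Hk : c^2 = (a^4-2*a^3*al)/(al^2-2*a*al)).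
  { rewrite <- HDN. field. lra. }
  assert (Hh1e : h1 = a^2*(a^2-c^2) - (a^2-al^2)*c^2).
  { unfold h1, hh1. replace (b^2) with (a^2-c^2) by lra. replace lam with (a^2-al^2) by lra. ring. }
  assert (Hh2e : h2 = a^2*(a^2-c^2) + (a^2-al^2)*c^2).
  { unfold h2, hh2. replace (b^2) with (a^2-c^2) by lra. replace lam with (a^2-al^2) by lra. ring. }
  assert (Hh3e : h3 = (a^2-al^2)*(a^2+(a^2-c^2)) - a^2*(a^2-c^2)).
  { unfold h3, hh3. replace (b^2) with (a^2-c^2) by lra. replace lam with (a^2-al^2) by lra. ring. }
  assert (HS1 : S1^2 = 1 - (c*C1)^2/c^2).
  { replace ((c*C1)^2/c^2) with (C1^2) by (field; lra). lra. }
  assert (Hnn : n2 = h1^2*(c*C1)^2/c^2 + h2^2*S1^2).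
  { unfold n2, A, B. field. lra. }
  split.
  - assert (Hcore : al*(a-c*C1)*(2*((p*r+sg*(q*s))^2+sg*(p*s+q*r)^2) - (2*sg*n2*(a+c*C1))^2)
      = 2*(a*(a-c*C1)-(a^2-al^2))*((p^2-sg*q^2)*(r^2-sg*s^2))).
    { apply (core_vertex a al (c*C1) (c^2) h1 h2 h3 (S1^2) n2 p r sg (q^2) (s^2) (q*s) ((p*s+q*r)^2));
        try lra; try assumption.
      - unfold p, A, B. field. split; lra.
      - unfold r, A. field. lra.
      - reflexivity.
      - unfold q, A, B. field. lra.
      - unfold s, B. ring.
      - unfold q, s, A, B. ring.
      - unfold s, q, A, B. field. lra. }
    replace lam with (a^2-al^2) by lra.
    rewrite <- Htau in Hcore.
    match goal with |- ?X2 = ?Y2 => match type of Hcore with ?X1 = ?Y1 =>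
      assert (E : X2 - Y2 = X1 - Y1) by ring end end.
    apply Rminus_diag_uniq. rewrite E, Hcore. ring.
  - assert (Hcore : (rr^2 - sg*s^2) + (a-c*C1)*(2*rr)
      = (3+2*(a^2-al^2)*(c^2/h1+a^2/h3))/(2*a)*((a-c*C1)*(rr^2-sg*s^2))).
    { apply (core_sum a al (c*C1) (c^2) h1 h2 h3 (S1^2) n2 sg (s^2) rr); try lra; try assumption.
      - reflexivity.
      - unfold s, B. ring.
      - unfold rr, A. field. lra. }
    replace lam with (a^2-al^2) by lra.
    replace ((rr - tau * s) * (rr + tau * s) + (a - c * C1) * (rr - tau * s + (rr + tau * s)))
      with ((rr^2 - tau^2*s^2) + (a-c*C1)*(2*rr)) by ring.
    replace ((a - c * C1) * (rr - tau * s) * (rr + tau * s)) with ((a-c*C1)*(rr^2-tau^2*s^2)) by ring.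
    rewrite Htau. exact Hcore.
Qed.


Definition mm (a b C1 S1 C2 S2 : R) := a^2*(1-(C1*C2-S1*S2)) + b^2*(1+(C1*C2-S1*S2)).

Lemma refl_poly (a b C S u1 u2 w1 w2 : R) :
  C^2+S^2 = 1 -> u1^2+u2^2 = 1 -> w1^2+w2^2=1 ->
  (u1+w1)*a*S - (u2+w2)*b*C = 0 ->
  (b^2*C^2+a^2*S^2)*((a^2*u2^2+b^2*u1^2-(a*C*u2-b*S*u1)^2) - (a^2*w2^2+b^2*w1^2-(a*C*w2-b*S*w1)^2)) = 0.
Proof. intros. nsatz'. Qed.

Lemma chord1 (a b C1 S1 C2 S2 : R) : C1^2+S1^2=1 -> C2^2+S2^2=1 ->
 a^2*(b*S2-b*S1)^2 + b^2*(a*C2-a*C1)^2 - (a*C1*(b*S2-b*S1)-b*S1*(a*C2-a*C1))^2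
  = a^2*b^2*(ee C1 S1 C2 S2)^2.
Proof. unfold ee. intros. nsatz'. Qed.

Lemma chord2 (a b C1 S1 C2 S2 : R) : C1^2+S1^2=1 -> C2^2+S2^2=1 ->
 (a*C2-a*C1)^2 + (b*S2-b*S1)^2 = ee C1 S1 C2 S2 * mm a b C1 S1 C2 S2.
Proof. unfold ee, mm. intros. nsatz'. Qed.

Lemma ee_sym (C1 S1 C2 S2 : R) : ee C1 S1 C2 S2 = ee C2 S2 C1 S1.
Proof. unfold ee. ring. Qed.
Lemma mm_sym (a b C1 S1 C2 S2 : R) : mm a b C1 S1 C2 S2 = mm a b C2 S2 C1 S1.
Proof. unfold mm. ring. Qed.

Lemma ee_circ (C1 S1 C2 S2 : R) : C1^2+S1^2=1 -> C2^2+S2^2=1 ->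
  2 * ee C1 S1 C2 S2 = (C2-C1)^2 + (S2-S1)^2.
Proof. unfold ee. intros. nra. Qed.

Lemma sq_pos (x : R) : x <> 0 -> 0 < x^2.
Proof. intro H. pose proof (Rsqr_pos_lt x H). unfold Rsqr in *. nra. Qed.

Lemma chord_pos (a b C1 S1 C2 S2 : R) : 0 < a -> 0 < b -> C1^2+S1^2=1 -> C2^2+S2^2=1 ->
  0 < ee C1 S1 C2 S2 -> 0 < (a*C2-a*C1)^2 + (b*S2-b*S1)^2 /\ 0 < mm a b C1 S1 C2 S2.
Proof.
  intros Ha Hb H1 H2 He. pose proof (ee_circ _ _ _ _ H1 H2) as E.
  assert (0 < (a*C2-a*C1)^2 + (b*S2-b*S1)^2).
  { destruct (Req_dec C2 C1) as [Ec|Ec].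
    - assert (S2 - S1 <> 0).
      { intro Z. rewrite Ec in E. assert (S2 = S1) by lra. subst. nra. }
      assert (0 < (b*S2-b*S1)^2).
      { apply sq_pos. replace (b*S2-b*S1) with (b*(S2-S1)) by ring.
        apply Rmult_integral_contrapositive_currified; lra. }
      pose proof (pow2_ge_0 (a*C2-a*C1)). lra.
    - assert (0 < (a*C2-a*C1)^2).
      { apply sq_pos. replace (a*C2-a*C1) with (a*(C2-C1)) by ring.
        apply Rmult_integral_contrapositive_currified; lra. }
      pose proof (pow2_ge_0 (b*S2-b*S1)). lra. }
  split; [assumption|].
  rewrite chord2 in H by assumption.
  destruct (Rlt_or_le 0 (mm a b C1 S1 C2 S2)) as [|Hm]; [assumption|]. nra.
Qed.

Lemma bis (a b C1 S1 C2 S2 C3 S3 : R) : 0 < a -> 0 < b ->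
  C1^2+S1^2=1 -> C2^2+S2^2=1 -> C3^2+S3^2=1 ->
  0 < ee C1 S1 C2 S2 -> 0 < ee C1 S1 C3 S3 ->
  bisects_normal a b (a*C3, b*S3) (a*C1, b*S1) (a*C2, b*S2) ->
  ee C1 S1 C2 S2 * mm a b C1 S1 C3 S3 = ee C1 S1 C3 S3 * mm a b C1 S1 C2 S2.
Proof.
  intros Ha Hb HZ1 HZ2 HZ3 He12 He13 Hbis.
  destruct (chord_pos a b C1 S1 C2 S2) as [Hv2 Hm2]; try assumption.
  destruct (chord_pos a b C1 S1 C3 S3) as [Hv3 Hm3]; try assumption.
  unfold bisects_normal, unitv, vnorm, vscale, vadd, vsub, cross, ell_normal, dot in Hbis.
  cbn [fst snd] in Hbis.
  set (v1 := a*C2-a*C1) in *. set (v2 := b*S2-b*S1) in *.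
  set (z1 := a*C3-a*C1) in *. set (z2 := b*S3-b*S1) in *.
  assert (Ev : v1*v1+v2*v2 = v1^2+v2^2) by ring.
  assert (Ez : z1*z1+z2*z2 = z1^2+z2^2) by ring.
  rewrite Ev, Ez in Hbis.
  set (nv := sqrt (v1^2+v2^2)) in *. set (nz := sqrt (z1^2+z2^2)) in *.
  assert (Hnv : 0 < nv) by (apply sqrt_lt_R0; assumption).
  assert (Hnz : 0 < nz) by (apply sqrt_lt_R0; assumption).
  assert (Hnv2 : nv^2 = v1^2+v2^2) by (unfold nv; rewrite pow2_sqrt; lra).
  assert (Hnz2 : nz^2 = z1^2+z2^2) by (unfold nz; rewrite pow2_sqrt; lra).
  pose proof (refl_poly a b C1 S1 (/nv*v1) (/nv*v2) (/nz*z1) (/nz*z2) HZ1) as R.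
  assert (Hu : (/nv*v1)^2 + (/nv*v2)^2 = 1).
  { replace ((/nv*v1)^2 + (/nv*v2)^2) with ((v1^2+v2^2)/nv^2) by (field; lra).
    rewrite Hnv2. field. lra. }
  assert (Hw : (/nz*z1)^2 + (/nz*z2)^2 = 1).
  { replace ((/nz*z1)^2 + (/nz*z2)^2) with ((z1^2+z2^2)/nz^2) by (field; lra).
    rewrite Hnz2. field. lra. }
  specialize (R Hu Hw).
  assert (Hcr : (/nv*v1 + /nz*z1)*a*S1 - (/nv*v2 + /nz*z2)*b*C1 = 0).
  { apply (Rmult_eq_reg_l (/(a*b))).
    2:{ apply Rinv_neq_0_compat. nra. }
    rewrite Rmult_0_r. rewrite <- Hbis. field. lra. }
  specialize (R Hcr).
  assert (Hpos : 0 < b^2*C1^2+a^2*S1^2).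
  { destruct (Req_dec C1 0) as [E|E].
    - subst C1. assert (S1^2 = 1) by lra. rewrite H. assert (0 < a^2) by (apply pow_lt; lra). lra.
    - assert (0 < b^2*C1^2) by (apply Rmult_lt_0_compat; [apply pow_lt; lra| apply sq_pos; assumption]).
      assert (0 <= a^2*S1^2) by (apply Rmult_le_pos; apply pow2_ge_0). lra. }
  assert (Q : a^2*(/nv*v2)^2+b^2*(/nv*v1)^2-(a*C1*(/nv*v2)-b*S1*(/nv*v1))^2
            = a^2*(/nz*z2)^2+b^2*(/nz*z1)^2-(a*C1*(/nz*z2)-b*S1*(/nz*z1))^2).
  { apply (Rmult_eq_reg_l (b^2*C1^2+a^2*S1^2)); [|lra]. lra. }
  replace (a^2*(/nv*v2)^2+b^2*(/nv*v1)^2-(a*C1*(/nv*v2)-b*S1*(/nv*v1))^2)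
    with ((a^2*v2^2+b^2*v1^2-(a*C1*v2-b*S1*v1)^2)/nv^2) in Q by (field; lra).
  replace (a^2*(/nz*z2)^2+b^2*(/nz*z1)^2-(a*C1*(/nz*z2)-b*S1*(/nz*z1))^2)
    with ((a^2*z2^2+b^2*z1^2-(a*C1*z2-b*S1*z1)^2)/nz^2) in Q by (field; lra).
  unfold v1, v2, z1, z2 in Q, Hnv2, Hnz2.
  rewrite chord1, chord1 in Q by assumption.
  rewrite Hnv2, Hnz2 in Q.
  rewrite chord2, chord2 in Q by assumption.
  assert (0 < a^2*b^2) by (apply Rmult_lt_0_compat; apply pow_lt; lra).
  assert (Hm2' : mm a b C1 S1 C2 S2 <> 0) by lra.
  assert (Hm3' : mm a b C1 S1 C3 S3 <> 0) by lra.
  replace (a^2*b^2*ee C1 S1 C2 S2^2/(ee C1 S1 C2 S2*mm a b C1 S1 C2 S2))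
    with (a^2*b^2*ee C1 S1 C2 S2/mm a b C1 S1 C2 S2) in Q by (field; lra).
  replace (a^2*b^2*ee C1 S1 C3 S3^2/(ee C1 S1 C3 S3*mm a b C1 S1 C3 S3))
    with (a^2*b^2*ee C1 S1 C3 S3/mm a b C1 S1 C3 S3) in Q by (field; lra).
  apply (Rmult_eq_reg_l (a^2*b^2/(mm a b C1 S1 C2 S2*mm a b C1 S1 C3 S3))).
  - replace (a ^ 2 * b ^ 2 / (mm a b C1 S1 C2 S2 * mm a b C1 S1 C3 S3) * (ee C1 S1 C2 S2 * mm a b C1 S1 C3 S3))
      with (a^2*b^2*ee C1 S1 C2 S2/mm a b C1 S1 C2 S2) by (field; lra).
    rewrite Q. field. lra.
  - apply Rmult_integral_contrapositive_currified; [lra|].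
    apply Rinv_neq_0_compat. apply Rmult_integral_contrapositive_currified; lra.
Qed.
Lemma cay_ident (h1 h2 h3 C1 S1 C2 S2 C3 S3 : R) :
  let m := fun Ci Si Cj Sj => h1*Ci*Cj + h2*Si*Sj + h3 in
  let g := fun Ci Si Cj Sj => Ci*Cj + Si*Sj - 1 in
  let m11 := m C1 S1 C1 S1 in let m22 := m C2 S2 C2 S2 in let m33 := m C3 S3 C3 S3 in
  let m12 := m C1 S1 C2 S2 in let m13 := m C1 S1 C3 S3 in let m23 := m C2 S2 C3 S3 in
  (h2*h3+h1*h3-h1*h2)*(C1*(S2-S3)-C2*(S1-S3)+C3*(S1-S2))^2 =
  (m22*m33 - m23^2)*g C1 S1 C1 S1 + (m11*m33 - m13^2)*g C2 S2 C2 S2 + (m11*m22 - m12^2)*g C3 S3 C3 S3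
  + 2*((m13*m23 - m12*m33)*g C1 S1 C2 S2 + (m12*m23 - m13*m22)*g C1 S1 C3 S3 + (m12*m13 - m11*m23)*g C2 S2 C3 S3).
Proof. intros. unfold m11, m22, m33, m12, m13, m23, m, g. ring. Qed.


Lemma ell_param (a b x y : R) : 0 < a -> 0 < b -> x^2/a^2 + y^2/b^2 = 1 ->
  exists C S, x = a*C /\ y = b*S /\ C^2+S^2 = 1.
Proof.
  intros Ha Hb H. exists (x/a), (y/b). split; [field; lra|]. split; [field; lra|].
  rewrite <- H. field. split; lra.
Qed.

Lemma detsq (C1 S1 C2 S2 C3 S3 : R) : C1^2+S1^2=1 -> C2^2+S2^2=1 -> C3^2+S3^2=1 ->
 (C1*(S2-S3)-C2*(S1-S3)+C3*(S1-S2))^2 = 2*ee C1 S1 C2 S2*ee C1 S1 C3 S3*ee C2 S2 C3 S3.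
Proof. unfold ee. intros. nsatz'. Qed.

Lemma cayley (h1 h2 h3 C1 S1 C2 S2 C3 S3 : R) :
  C1^2+S1^2=1 -> C2^2+S2^2=1 -> C3^2+S3^2=1 ->
  h1*C1*C2 + h2*S1*S2 + h3 = 0 -> h1*C1*C3 + h2*S1*S3 + h3 = 0 -> h1*C2*C3 + h2*S2*S3 + h3 = 0 ->
  0 < ee C1 S1 C2 S2 -> 0 < ee C1 S1 C3 S3 -> 0 < ee C2 S2 C3 S3 ->
  h2*h3+h1*h3-h1*h2 = 0.
Proof.
  intros HZ1 HZ2 HZ3 H12 H13 H23 He12 He13 He23.
  pose proof (cay_ident h1 h2 h3 C1 S1 C2 S2 C3 S3) as E. cbv beta zeta in E.
  rewrite H12, H13, H23 in E.
  replace (C1*C1+S1*S1-1) with 0 in E by nra.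
  replace (C2*C2+S2*S2-1) with 0 in E by nra.
  replace (C3*C3+S3*S3-1) with 0 in E by nra.
  assert (Hd : (C1*(S2-S3)-C2*(S1-S3)+C3*(S1-S2))^2 = 2*ee C1 S1 C2 S2*ee C1 S1 C3 S3*ee C2 S2 C3 S3).
  { apply detsq; assumption. }
  assert (0 < (C1*(S2-S3)-C2*(S1-S3)+C3*(S1-S2))^2).
  { rewrite Hd. apply Rmult_lt_0_compat; [|assumption]. apply Rmult_lt_0_compat; [|assumption]. lra. }
  apply (Rmult_eq_reg_r ((C1*(S2-S3)-C2*(S1-S3)+C3*(S1-S2))^2)); [|lra].
  rewrite E. ring.
Qed.

Lemma cs_bound (u v : pt) : 0 < dot u u -> 0 < dot v v ->
  -1 <= dot u v / (vnorm u * vnorm v) <= 1.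
Proof.
  intros Hu Hv. unfold vnorm.
  assert (Hnu : 0 < sqrt (dot u u)) by (apply sqrt_lt_R0; assumption).
  assert (Hnv : 0 < sqrt (dot v v)) by (apply sqrt_lt_R0; assumption).
  assert (Hsq : (sqrt (dot u u) * sqrt (dot v v))^2 = dot u u * dot v v).
  { rewrite Rpow_mult_distr, !pow2_sqrt; lra. }
  assert (CS : (dot u v)^2 <= dot u u * dot v v).
  { destruct u as [u1 u2], v as [v1 v2]. unfold dot. simpl.
    assert (0 <= (u1*v2-u2*v1)^2) by apply pow2_ge_0. nra. }
  set (n := sqrt (dot u u) * sqrt (dot v v)) in *.
  assert (Hn : 0 < n) by (apply Rmult_lt_0_compat; assumption).
  assert (Habs : -n <= dot u v <= n) by (split; nra).
  split.
  - apply (Rmult_le_reg_r n); [assumption|]. field_simplify; lra.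
  - apply (Rmult_le_reg_r n); [assumption|]. field_simplify; lra.
Qed.

Lemma cos_law (p q r : pt) (G X Y Z : R) : 0 < G -> 0 < X -> 0 < Y ->
  dot (vsub q p) (vsub q p) = G*X^2 -> dot (vsub r p) (vsub r p) = G*Y^2 ->
  dot (vsub q r) (vsub q r) = G*Z^2 ->
  cos (angle_at q p r) = (X^2+Y^2-Z^2)/(2*X*Y).
Proof.
  intros HG HX HY Hq Hr Hqr. unfold angle_at.
  rewrite cos_acos.
  2:{ apply cs_bound; rewrite ?Hq, ?Hr; apply Rmult_lt_0_compat; try apply pow_lt; lra. }
  assert (Hd : dot (vsub q p) (vsub r p) = (G*X^2 + G*Y^2 - G*Z^2)/2).
  { rewrite <- Hq, <- Hr, <- Hqr. destruct p, q, r. unfold dot, vsub. simpl. field. }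
  unfold vnorm. rewrite Hd, Hq, Hr.
  rewrite !sqrt_mult by (try apply pow2_ge_0; lra).
  rewrite !sqrt_pow2 by lra.
  replace (sqrt G * X * (sqrt G * Y)) with ((sqrt G * sqrt G) * (X * Y)) by ring.
  rewrite sqrt_sqrt by lra.
  field. lra.
Qed.

Lemma inv_dist (f : pt) (rho : R) (Pi Pj : pt) :
  0 < dot (vsub Pi f) (vsub Pi f) -> 0 < dot (vsub Pj f) (vsub Pj f) ->
  dot (vsub (invert f rho Pi) (invert f rho Pj)) (vsub (invert f rho Pi) (invert f rho Pj))
  = rho^4 * dot (vsub Pi Pj) (vsub Pi Pj) / (dot (vsub Pi f) (vsub Pi f) * dot (vsub Pj f) (vsub Pj f)).
Proof.
  destruct f as [f1 f2], Pi as [x1 y1], Pj as [x2 y2].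
  unfold invert, dot, vsub, vadd, vscale. simpl. intros H1 H2.
  field. lra.
Qed.

Lemma focal (a b c C S : R) : c^2 = a^2-b^2 -> C^2+S^2 = 1 ->
  dot (vsub (a*C, b*S) (-c, 0)) (vsub (a*C, b*S) (-c, 0)) = (a + c*C)^2.
Proof. intros Hc HZ. unfold dot, vsub. simpl. nsatz'. Qed.

Lemma lam_factor (a b d lam : R) : d^2 = a^4-a^2*b^2+b^4 ->
  ((a^2-b^2)^2*lam - a^2*b^2*(2*d-a^2-b^2))*((a^2-b^2)^2*lam + a^2*b^2*(2*d+a^2+b^2))
  = (a^2-b^2)^2*(hh2 a b lam*hh3 a b lam + hh1 a b lam*hh3 a b lam - hh1 a b lam*hh2 a b lam).
Proof. unfold hh1, hh2, hh3. intros. nsatz'. Qed.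

Lemma lam_solve (a b d lam : R) : 0 < b -> b < a -> 0 < d -> d^2 = a^4-a^2*b^2+b^4 -> 0 < lam ->
  hh2 a b lam*hh3 a b lam + hh1 a b lam*hh3 a b lam - hh1 a b lam*hh2 a b lam = 0 ->
  (a^2-b^2)^2*lam = a^2*b^2*(2*d-a^2-b^2).
Proof.
  intros Hb Hba Hd Hd2 Hl Hc.
  pose proof (lam_factor a b d lam Hd2) as F. rewrite Hc, Rmult_0_r in F.
  apply Rmult_integral in F. destruct F as [F|F]; [lra|].
  exfalso.
  assert (0 < a^2*b^2) by (apply Rmult_lt_0_compat; apply pow_lt; lra).
  assert (0 < (a^2-b^2)^2) by (apply pow_lt; nra).
  assert (0 < (a^2-b^2)^2*lam) by (apply Rmult_lt_0_compat; lra).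
  assert (0 < a^2*b^2*(2*d+a^2+b^2)) by (apply Rmult_lt_0_compat; nra).
  lra.
Qed.

Lemma alpha_facts (a b d lam : R) : 0 < b -> b < a -> 0 < d -> d^2 = a^4-a^2*b^2+b^4 -> 0 < lam ->
  (a^2-b^2)^2*lam = a^2*b^2*(2*d-a^2-b^2) ->
  let al := a*(d-b^2)/(a^2-b^2) in
  0 < al /\ al < a /\ al^2 = a^2 - lam /\ (a^2-b^2)*(al^2-2*a*al) = a^4-2*a^3*al /\
  0 < hh1 a b lam /\ 0 < hh2 a b lam /\ 0 < hh3 a b lam /\ b^2 < d /\ d < a^2.
Proof.
  intros Hb Hba Hd Hd2 Hl Hlam al.
  assert (Ha : 0 < a) by lra.
  assert (Hab : 0 < a^2-b^2) by nra.
  assert (Hdb : b^2 < d).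
  { assert (b^4 < d^2).
    { rewrite Hd2. assert (0 < a^2*(a^2-b^2)) by (apply Rmult_lt_0_compat; nra). nra. }
    destruct (Rlt_or_le (b^2) d); [assumption|].
    assert (0 <= b^2) by nra. assert (d^2 <= (b^2)^2) by (apply pow_incr; lra). nra. }
  assert (Hda : d < a^2).
  { assert (d^2 < a^4).
    { rewrite Hd2. assert (0 < b^2*(a^2-b^2)) by (apply Rmult_lt_0_compat; nra). nra. }
    destruct (Rlt_or_le d (a^2)); [assumption|].
    assert ((a^2)^2 <= d^2) by (apply pow_incr; nra). nra. }
  assert (Hal : 0 < al) by (unfold al; apply Rdiv_lt_0_compat; nra).
  assert (Hal2 : al^2 = a^2 - lam).
  { apply (Rmult_eq_reg_r ((a^2-b^2)^2)); [|nra].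
    rewrite Rmult_minus_distr_r. replace (lam*(a^2-b^2)^2) with ((a^2-b^2)^2*lam) by ring.
    rewrite Hlam. unfold al. field_simplify; [|lra]. clear - Hd2. nsatz'. }
  assert (0 < hh1 a b lam).
  { unfold hh1. apply (Rmult_lt_reg_r ((a^2-b^2))); [lra|].
    replace ((a ^ 2 * b ^ 2 - lam * (a ^ 2 - b ^ 2)) * (a ^ 2 - b ^ 2)) with
      (a^2*b^2*(a^2-b^2) - (a^2-b^2)^2*lam) by ring.
    rewrite Hlam. rewrite Rmult_0_l.
    assert (0 < a^2*b^2) by (apply Rmult_lt_0_compat; apply pow_lt; lra). nra. }
  assert (0 < hh2 a b lam).
  { unfold hh2. assert (0 < a^2*b^2) by (apply Rmult_lt_0_compat; apply pow_lt; lra). nra. }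
  assert (0 < hh3 a b lam).
  { pose proof (lam_factor a b d lam Hd2) as F.
    rewrite Hlam in F. replace (a ^ 2 * b ^ 2 * (2 * d - a ^ 2 - b ^ 2) - a ^ 2 * b ^ 2 * (2 * d - a ^ 2 - b ^ 2)) with 0 in F by ring.
    rewrite Rmult_0_l in F.
    assert (E : hh3 a b lam * (hh1 a b lam + hh2 a b lam) = hh1 a b lam * hh2 a b lam).
    { assert (0 < (a^2-b^2)^2) by nra.
      apply (Rmult_eq_reg_l ((a^2-b^2)^2)); [|lra]. lra. }
    assert (0 < hh1 a b lam * hh2 a b lam) by (apply Rmult_lt_0_compat; assumption).
    nra. }
  repeat split; try assumption.
  - nra.
  - unfold al. field_simplify_eq. 1: (clear - Hd2; nsatz'). all: nra.
Qed.
Lemma param_final (a b d lam : R) : 0 < a -> 0 < b -> b < a -> 0 < d -> d^2 = a^4-a^2*b^2+b^4 ->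
  lam = a^2*b^2*(2*d-a^2-b^2)/(a^2-b^2)^2 ->
  hh1 a b lam <> 0 -> hh3 a b lam <> 0 -> d - b^2 <> 0 ->
  (3*a - lam*((3+2*lam*((a^2-b^2)/hh1 a b lam + a^2/hh3 a b lam))/(2*a)))/(a*(d-b^2)/(a^2-b^2))
   = d*(a^2+(a^2-b^2)-d)/(a^2*(a^2-b^2)).
Proof.
  intros Ha Hb Hba Hd Hd2 Hl H1 H3 Hdb.
  assert (Hab : a^2-b^2 <> 0) by nra.
  unfold hh1, hh3 in *. subst lam.
  field_simplify_eq.
  - nsatz'.
  - repeat split; try assumption; try lra.
    + intro Z. apply H3. apply (Rmult_eq_reg_r ((a^2-b^2)^2)); [|apply pow_nonzero; assumption].
      rewrite Rmult_0_l, <- Z. field. assumption.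
    + intro Z. apply H1. apply (Rmult_eq_reg_r (a^2-b^2)); [|assumption].
      rewrite Rmult_0_l, <- Z. field. assumption.
Qed.


Lemma bil_eq (a b lam C1 S1 C2 S2 : R) :
  bil a b lam C1 S1 C2 S2 = lam*mm a b C1 S1 C2 S2 - a^2*b^2*ee C1 S1 C2 S2.
Proof. unfold bil, hh1, hh2, hh3, mm, ee. ring. Qed.

Lemma bil_sym (a b lam C1 S1 C2 S2 : R) : bil a b lam C1 S1 C2 S2 = bil a b lam C2 S2 C1 S1.
Proof. unfold bil. ring. Qed.

Lemma qdist (a b c rho lam Ci Si Cj Sj : R) : 0 < a -> 0 < b -> c^2 = a^2-b^2 -> 0 < c -> c < a ->
  Ci^2+Si^2 = 1 -> Cj^2+Sj^2 = 1 -> 0 < lam ->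
  lam*mm a b Ci Si Cj Sj = a^2*b^2*ee Ci Si Cj Sj ->
  dot (vsub (invert (-c,0) rho (a*Ci,b*Si)) (invert (-c,0) rho (a*Cj,b*Sj)))
      (vsub (invert (-c,0) rho (a*Ci,b*Si)) (invert (-c,0) rho (a*Cj,b*Sj)))
  = rho^4*a^2*b^2*(ee Ci Si Cj Sj)^2/(lam*(a+c*Ci)^2*(a+c*Cj)^2).
Proof.
  intros Ha Hb Hc Hc0 Hca Hi Hj Hl Hm.
  assert (Hdi : 0 < a + c*Ci) by nra.
  assert (Hdj : 0 < a + c*Cj) by nra.
  rewrite inv_dist; rewrite ?focal by assumption; try (apply pow_lt; lra).
  assert (E : dot (vsub (a*Ci, b*Si) (a*Cj, b*Sj)) (vsub (a*Ci, b*Si) (a*Cj, b*Sj))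
             = ee Ci Si Cj Sj * mm a b Ci Si Cj Sj).
  { rewrite <- chord2 by assumption. unfold dot, vsub. simpl. ring. }
  rewrite E.
  replace (mm a b Ci Si Cj Sj) with (a^2*b^2*ee Ci Si Cj Sj/lam)
    by (apply (Rmult_eq_reg_l lam); [rewrite Hm; field; lra | lra]).
  field. repeat split; lra.
Qed.

Lemma ratio_eq (u v w z : R) : v <> 0 -> z <> 0 -> z*u = w*v -> u/v = w/z.
Proof. intros Hv Hz H. field_simplify_eq; [|split; assumption]. lra. Qed.

Lemma qdistG (a b c rho lam Ci Si Cj Sj dk G : R) : 0 < a -> 0 < b -> c^2 = a^2-b^2 -> 0 < c -> c < a ->
  Ci^2+Si^2 = 1 -> Cj^2+Sj^2 = 1 -> 0 < lam ->
  lam*mm a b Ci Si Cj Sj = a^2*b^2*ee Ci Si Cj Sj ->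
  0 < dk -> G*dk^2 = rho^4*a^2*b^2/(lam*(a+c*Ci)^2*(a+c*Cj)^2) ->
  dot (vsub (invert (-c,0) rho (a*Ci,b*Si)) (invert (-c,0) rho (a*Cj,b*Sj)))
      (vsub (invert (-c,0) rho (a*Ci,b*Si)) (invert (-c,0) rho (a*Cj,b*Sj)))
  = G*(ee Ci Si Cj Sj*dk)^2.
Proof.
  intros Ha Hb Hc Hc0 Hca Hi Hj Hl Hm Hdk HG.
  rewrite (qdist a b c rho lam Ci Si Cj Sj) by assumption.
  replace (G*(ee Ci Si Cj Sj*dk)^2) with ((G*dk^2)*ee Ci Si Cj Sj^2) by ring.
  rewrite HG.
  assert (0 < a + c*Ci) by nra. assert (0 < a + c*Cj) by nra.
  field. repeat split; lra.
Qed.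

Lemma dpos (a c C S : R) : 0 < c -> c < a -> C^2+S^2 = 1 -> 0 < a + c*C /\ 0 < a - c*C.
Proof. intros. split; nra. Qed.


Theorem mainTheorem12 (a b rho : R) (P1 P2 P3 : pt) :
  0 < b -> b < a -> 0 < rho ->
  three_periodic a b P1 P2 P3 ->
  let c := sqrt (a^2 - b^2) in
  let f1 := (- c, 0) in
  let Q1 := invert f1 rho P1 in
  let Q2 := invert f1 rho P2 in
  let Q3 := invert f1 rho P3 in
  let delta := sqrt (a^4 - a^2 * b^2 + b^4) in
  cos (angle_at Q3 Q1 Q2) + cos (angle_at Q1 Q2 Q3) + cos (angle_at Q2 Q3 Q1)
  = delta * (a^2 + c^2 - delta) / (a^2 * c^2).
Proof.
  intros Hb Hba Hrho H3.
  assert (Ha : 0 < a) by lra.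
  destruct P1 as [x1 y1], P2 as [x2 y2], P3 as [x3 y3].
  destruct H3 as (E1 & E2 & E3 & N12 & N23 & N31 & B1 & B2 & B3).
  unfold on_ellipse in E1, E2, E3. simpl in E1, E2, E3.
  destruct (ell_param a b x1 y1 Ha Hb E1) as (C1 & S1 & -> & -> & HZ1).
  destruct (ell_param a b x2 y2 Ha Hb E2) as (C2 & S2 & -> & -> & HZ2).
  destruct (ell_param a b x3 y3 Ha Hb E3) as (C3 & S3 & -> & -> & HZ3).
  clear E1 E2 E3 B3.
  intros c f1 Q1 Q2 Q3 delta.
  assert (Hab : 0 < a^2 - b^2) by nra.
  assert (Hc2 : c^2 = a^2 - b^2) by (unfold c; rewrite pow2_sqrt; lra).
  assert (Hc : 0 < c) by (unfold c; apply sqrt_lt_R0; lra).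
  assert (Hca : c < a) by nra.
  assert (Hpos4 : 0 < a^4 - a^2*b^2 + b^4).
  { assert (0 < a^2*(a^2-b^2)) by (apply Rmult_lt_0_compat; nra).
    assert (0 < b^4) by (apply pow_lt; lra). nra. }
  assert (Hdel2 : delta^2 = a^4 - a^2*b^2 + b^4) by (unfold delta; rewrite pow2_sqrt; lra).
  assert (Hdel : 0 < delta) by (unfold delta; apply sqrt_lt_R0; lra).
  assert (Hne : forall Ci Si Cj Sj, Ci^2+Si^2=1 -> Cj^2+Sj^2=1 ->
             (a*Ci, b*Si) <> (a*Cj, b*Sj) -> 0 < ee Ci Si Cj Sj).
  { intros Ci Si Cj Sj Hi Hj N. pose proof (ee_circ Ci Si Cj Sj Hi Hj) as E.
    destruct (Rlt_or_le 0 (ee Ci Si Cj Sj)) as [|Hle]; [assumption|]. exfalso. apply N.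
    pose proof (pow2_ge_0 (Cj-Ci)). pose proof (pow2_ge_0 (Sj-Si)).
    assert (E1 : (Cj-Ci)^2 = 0) by lra. assert (E2 : (Sj-Si)^2 = 0) by lra.
    replace Cj with Ci by nra. replace Sj with Si by nra. reflexivity. }
  pose proof (Hne C1 S1 C2 S2 HZ1 HZ2 N12) as He12.
  pose proof (Hne C2 S2 C3 S3 HZ2 HZ3 N23) as He23.
  pose proof (Hne C3 S3 C1 S1 HZ3 HZ1 N31) as He31.
  assert (He13 : 0 < ee C1 S1 C3 S3) by (rewrite ee_sym; assumption).
  assert (He21 : 0 < ee C2 S2 C1 S1) by (rewrite ee_sym; assumption).
  destruct (chord_pos a b C1 S1 C2 S2 Ha Hb HZ1 HZ2 He12) as [_ Hm12].
  destruct (chord_pos a b C1 S1 C3 S3 Ha Hb HZ1 HZ3 He13) as [_ Hm13].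
  destruct (chord_pos a b C2 S2 C3 S3 Ha Hb HZ2 HZ3 He23) as [_ Hm23].
  pose proof (bis a b C1 S1 C2 S2 C3 S3 Ha Hb HZ1 HZ2 HZ3 He12 He13 B1) as Bi1.
  pose proof (bis a b C2 S2 C3 S3 C1 S1 Ha Hb HZ2 HZ3 HZ1 He23 He21 B2) as Bi2.
  rewrite (ee_sym C2 S2 C1 S1), (mm_sym a b C2 S2 C1 S1) in Bi2.
  set (lam := a^2*b^2*ee C1 S1 C2 S2/mm a b C1 S1 C2 S2).
  assert (Hab2 : 0 < a^2*b^2) by (apply Rmult_lt_0_compat; apply pow_lt; lra).
  assert (Hl : 0 < lam) by (unfold lam; apply Rdiv_lt_0_compat; [apply Rmult_lt_0_compat|]; lra).
  assert (HL12 : lam*mm a b C1 S1 C2 S2 = a^2*b^2*ee C1 S1 C2 S2) by (unfold lam; field; lra).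
  assert (HL13 : lam*mm a b C1 S1 C3 S3 = a^2*b^2*ee C1 S1 C3 S3).
  { unfold lam.
    replace (a^2*b^2*ee C1 S1 C2 S2/mm a b C1 S1 C2 S2*mm a b C1 S1 C3 S3)
      with (a^2*b^2*(ee C1 S1 C2 S2*mm a b C1 S1 C3 S3)/mm a b C1 S1 C2 S2) by (field; lra).
    rewrite Bi1. field. lra. }
  assert (HL23 : lam*mm a b C2 S2 C3 S3 = a^2*b^2*ee C2 S2 C3 S3).
  { unfold lam.
    replace (a^2*b^2*ee C1 S1 C2 S2/mm a b C1 S1 C2 S2*mm a b C2 S2 C3 S3)
      with (a^2*b^2*(ee C1 S1 C2 S2*mm a b C2 S2 C3 S3)/mm a b C1 S1 C2 S2) by (field; lra).
    rewrite <- Bi2. field. lra. }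
  assert (Hb12 : bil a b lam C1 S1 C2 S2 = 0) by (rewrite bil_eq; lra).
  assert (Hb13 : bil a b lam C1 S1 C3 S3 = 0) by (rewrite bil_eq; lra).
  assert (Hb23 : bil a b lam C2 S2 C3 S3 = 0) by (rewrite bil_eq; lra).
  assert (Hb21 : bil a b lam C2 S2 C1 S1 = 0) by (rewrite bil_sym; assumption).
  assert (Hb31 : bil a b lam C3 S3 C1 S1 = 0) by (rewrite bil_sym; assumption).
  assert (Hb32 : bil a b lam C3 S3 C2 S2 = 0) by (rewrite bil_sym; assumption).
  pose proof (cayley (hh1 a b lam) (hh2 a b lam) (hh3 a b lam) C1 S1 C2 S2 C3 S3
     HZ1 HZ2 HZ3 Hb12 Hb13 Hb23 He12 He13 He23) as Hcay.
  pose proof (lam_solve a b delta lam Hb Hba Hdel Hdel2 Hl Hcay) as Hlamv.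
  destruct (alpha_facts a b delta lam Hb Hba Hdel Hdel2 Hl Hlamv)
    as (Hal & Hala & Hal2 & HDN & Hh1 & Hh2 & Hh3 & Hdb & Hda).
  set (al := a*(delta-b^2)/(a^2-b^2)) in *.
  rewrite <- Hc2 in HDN.
  destruct (vertex a b c lam al C1 S1 C2 S2 C3 S3 Ha Hc Hc2 Hal Hala Hal2 HDN Hh1 Hh2 Hh3
     HZ1 HZ2 HZ3 Hb12 Hb13 He23) as [V1 V1s].
  destruct (vertex a b c lam al C2 S2 C3 S3 C1 S1 Ha Hc Hc2 Hal Hala Hal2 HDN Hh1 Hh2 Hh3
     HZ2 HZ3 HZ1 Hb23 Hb21 He31) as [V2 _].
  destruct (vertex a b c lam al C3 S3 C1 S1 C2 S2 Ha Hc Hc2 Hal Hala Hal2 HDN Hh1 Hh2 Hh3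
     HZ3 HZ1 HZ2 Hb31 Hb32 He12) as [V3 _].
  rewrite (ee_sym C2 S2 C1 S1), (ee_sym C3 S3 C1 S1) in V2.
  rewrite (ee_sym C3 S3 C2 S2), (ee_sym C3 S3 C1 S1) in V3.
  assert (HLs : forall Ci Si Cj Sj, lam*mm a b Ci Si Cj Sj = a^2*b^2*ee Ci Si Cj Sj ->
            lam*mm a b Cj Sj Ci Si = a^2*b^2*ee Cj Sj Ci Si).
  { intros Ci Si Cj Sj H. rewrite mm_sym, ee_sym. assumption. }
  destruct (dpos a c C1 S1 Hc Hca HZ1) as [Hd1 Hd1'].
  destruct (dpos a c C2 S2 Hc Hca HZ2) as [Hd2 Hd2'].
  destruct (dpos a c C3 S3 Hc Hca HZ3) as [Hd3 Hd3'].
  set (G := rho^4*a^2*b^2/(lam*(a+c*C1)^2*(a+c*C2)^2*(a+c*C3)^2)).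
  assert (HG : 0 < G).
  { unfold G. apply Rdiv_lt_0_compat.
    - apply Rmult_lt_0_compat; [|apply pow_lt; lra]. apply Rmult_lt_0_compat; [|apply pow_lt; lra].
      apply pow_lt; lra.
    - apply Rmult_lt_0_compat; [|apply pow_lt; lra]. apply Rmult_lt_0_compat; [|apply pow_lt; lra]. apply Rmult_lt_0_compat; [assumption|apply pow_lt; lra]. }
  set (L1 := ee C2 S2 C3 S3*(a+c*C1)) in *.
  set (L2 := ee C1 S1 C3 S3*(a+c*C2)) in *.
  set (L3 := ee C1 S1 C2 S2*(a+c*C3)) in *.
  assert (HL1 : 0 < L1) by (apply Rmult_lt_0_compat; assumption).
  assert (HL2 : 0 < L2) by (apply Rmult_lt_0_compat; assumption).
  assert (HL3 : 0 < L3) by (apply Rmult_lt_0_compat; assumption).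
  unfold Q1, Q2, Q3, f1.
  assert (D12 : dot (vsub (invert (-c,0) rho (a*C1,b*S1)) (invert (-c,0) rho (a*C2,b*S2)))
      (vsub (invert (-c,0) rho (a*C1,b*S1)) (invert (-c,0) rho (a*C2,b*S2))) = G*L3^2).
  { apply (qdistG a b c rho lam C1 S1 C2 S2 (a+c*C3) G); try assumption. unfold G. field. repeat split; lra. }
  assert (D21 : dot (vsub (invert (-c,0) rho (a*C2,b*S2)) (invert (-c,0) rho (a*C1,b*S1)))
      (vsub (invert (-c,0) rho (a*C2,b*S2)) (invert (-c,0) rho (a*C1,b*S1))) = G*L3^2).
  { unfold L3. rewrite ee_sym. apply (qdistG a b c rho lam C2 S2 C1 S1 (a+c*C3) G); try assumption. apply HLs; assumption.
    unfold G. field. repeat split; lra. }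
  assert (D13 : dot (vsub (invert (-c,0) rho (a*C1,b*S1)) (invert (-c,0) rho (a*C3,b*S3)))
      (vsub (invert (-c,0) rho (a*C1,b*S1)) (invert (-c,0) rho (a*C3,b*S3))) = G*L2^2).
  { apply (qdistG a b c rho lam C1 S1 C3 S3 (a+c*C2) G); try assumption. unfold G. field. repeat split; lra. }
  assert (D31 : dot (vsub (invert (-c,0) rho (a*C3,b*S3)) (invert (-c,0) rho (a*C1,b*S1)))
      (vsub (invert (-c,0) rho (a*C3,b*S3)) (invert (-c,0) rho (a*C1,b*S1))) = G*L2^2).
  { unfold L2. rewrite ee_sym. apply (qdistG a b c rho lam C3 S3 C1 S1 (a+c*C2) G); try assumption. apply HLs; assumption.
    unfold G. field. repeat split; lra. }
  assert (D23 : dot (vsub (invert (-c,0) rho (a*C2,b*S2)) (invert (-c,0) rho (a*C3,b*S3)))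
      (vsub (invert (-c,0) rho (a*C2,b*S2)) (invert (-c,0) rho (a*C3,b*S3))) = G*L1^2).
  { apply (qdistG a b c rho lam C2 S2 C3 S3 (a+c*C1) G); try assumption. unfold G. field. repeat split; lra. }
  assert (D32 : dot (vsub (invert (-c,0) rho (a*C3,b*S3)) (invert (-c,0) rho (a*C2,b*S2)))
      (vsub (invert (-c,0) rho (a*C3,b*S3)) (invert (-c,0) rho (a*C2,b*S2))) = G*L1^2).
  { unfold L1. rewrite ee_sym. apply (qdistG a b c rho lam C3 S3 C2 S2 (a+c*C1) G); try assumption. apply HLs; assumption.
    unfold G. field. repeat split; lra. }
  rewrite (cos_law _ _ _ G L2 L3 L1 HG HL2 HL3 D31 D21 D32).
  rewrite (cos_law _ _ _ G L3 L1 L2 HG HL3 HL1 D12 D32 D13).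
  rewrite (cos_law _ _ _ G L1 L2 L3 HG HL1 HL2 D23 D13 D21).
  rewrite (ratio_eq (L2^2+L3^2-L1^2) (2*L2*L3) (a*(a-c*C1)-lam) (al*(a-c*C1)))
    by (first [ (apply Rgt_not_eq; apply Rmult_lt_0_compat; [apply Rmult_lt_0_compat|]; lra) | (apply Rgt_not_eq; apply Rmult_lt_0_compat; lra) | (rewrite V1; ring) ]).
  rewrite (ratio_eq (L3^2+L1^2-L2^2) (2*L3*L1) (a*(a-c*C2)-lam) (al*(a-c*C2)))
    by (first [ (apply Rgt_not_eq; apply Rmult_lt_0_compat; [apply Rmult_lt_0_compat|]; lra) | (apply Rgt_not_eq; apply Rmult_lt_0_compat; lra) | (rewrite V2; ring) ]).
  rewrite (ratio_eq (L1^2+L2^2-L3^2) (2*L1*L2) (a*(a-c*C3)-lam) (al*(a-c*C3)))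
    by (first [ (apply Rgt_not_eq; apply Rmult_lt_0_compat; [apply Rmult_lt_0_compat|]; lra) | (apply Rgt_not_eq; apply Rmult_lt_0_compat; lra) | (rewrite V3; ring) ]).
  set (kap := (3+2*lam*(c^2/hh1 a b lam + a^2/hh3 a b lam))/(2*a)) in *.
  assert (Hk : 1/(a-c*C1) + 1/(a-c*C2) + 1/(a-c*C3) = kap).
  { apply (Rmult_eq_reg_r ((a-c*C1)*(a-c*C2)*(a-c*C3))).
    - rewrite <- V1s. field. repeat split; lra.
    - apply Rgt_not_eq. repeat apply Rmult_lt_0_compat; lra. }
  replace ((a * (a - c * C1) - lam) / (al * (a - c * C1)) +
           (a * (a - c * C2) - lam) / (al * (a - c * C2)) +
           (a * (a - c * C3) - lam) / (al * (a - c * C3)))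
    with ((3*a - lam*(1/(a-c*C1) + 1/(a-c*C2) + 1/(a-c*C3)))/al)
    by (field; repeat split; lra).
  rewrite Hk. unfold kap, al. rewrite Hc2.
  apply param_final; try assumption; try lra.
  apply (Rmult_eq_reg_l ((a^2-b^2)^2)); [|apply pow_nonzero; lra].
  rewrite Hlamv. field. lra.
Qed.
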